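(* Let $n,p \in \mathbb{N}$, $S_1,\dots,S_p \in \mathbb{N}^n\setminus\{0\}$, $C = \frac{1}{2}\cdot 1_{n\times 1}$, $\rho > 0$, $R = \sqrt{\rho^2 + \frac{n}{4}}$ and $C_i = C - \rho\cdot\frac{S_i}{\|S_i\|}$ for $i \in \{1,\dots,p\}$. For $x \in \{0,1\}^n$: (a) if $x$ satisfies $-\frac{\epsilon}{2} \le \frac{S_i^T}{\|S_i\|}(x - C) \le \frac{\epsilon}{2}$ for all $i \in \{1,\dots,p\}$, then $x$ satisfies $-\frac{\delta}{2} \le \|x - C_i\| - R \le \frac{\delta}{2}$ for all $i$, with $\delta = 2\left(\frac{\epsilon}{2} + \frac{n}{8\rho}\right)$; (b) conversely, if $x$ satisfies $-\frac{\delta}{2} \le \|x - C_i\| - R \le \frac{\delta}{2}$ for all $i \in \{1,\dots,p\}$, then $x$ satisfies $-\frac{\epsilon}{2} \le \frac{S_i^T}{\|S_i\|}(x - C) \le \frac{\epsilon}{2}$ for all $i$, with $\epsilon = 2\left(\frac{\delta}{2} + \frac{n}{8\rho}\right)$.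
   Context: $1_{n\times 1}$ denotes the all-ones vector in $\mathbb{R}^n$ and $\|\cdot\|$ the Euclidean norm. *)

(* Defs.v *)
From HB Require Import structures.
From mathcomp Require Import all_boot all_order all_algebra.
Set Implicit Arguments. Unset Strict Implicit. Unset Printing Implicit Defensive.
Import Order.TTheory GRing.Theory Num.Theory.
Local Open Scope ring_scope.

Definition dotv (R : rcfType) (n : nat) (u v : 'I_n -> R) : R :=
  \sum_(j < n) u j * v j.
Definition enorm (R : rcfType) (n : nat) (v : 'I_n -> R) : R :=
  Num.sqrt (\sum_(j < n) v j ^+ 2).

(* Main.v *)
Require Import Defs.
From HB Require Import structures.
From mathcomp Require Import all_boot all_order all_algebra.
From mathcomp Require Import ring lra.
Import Order.TTheory GRing.Theory Num.Theory.
Local Open Scope ring_scope.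

Lemma alg_core (R : rcfType) (rho Rd a m t k : R) :
  0 < rho -> 0 <= Rd -> 0 <= a -> 0 <= m ->
  Rd ^+ 2 = rho ^+ 2 + m -> a ^+ 2 = Rd ^+ 2 + 2 * rho * t ->
  t ^+ 2 <= m -> 2 * rho * k = m ->
  [/\ t - k <= a - Rd, 0 <= t -> a - Rd <= t, t <= 0 -> a - Rd <= 0,
      t <= a - Rd + k &
     forall D, - D <= a - Rd -> 0 <= D -> - (D + k) <= t].
Proof.
move=> hrho hRd ha hm hR2 ha2 ht hk.
have k0 : 0 <= k by case: (lerP 0 k) => // hk'; exfalso; nra.
have Rdle : Rd <= rho + k by nra.
have rhole : rho <= Rd by nra.
have age : rho + t <= a by nra.
split; [lra| move=> h; nra | move=> h; nra |lra|].
move=> D h1 h0.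
case: (lerP 0 (Rd - D)) => h2.
  have hsq : (Rd - D) ^+ 2 <= a ^+ 2 by nra.
  have hRr : (Rd - rho) ^+ 2 <= m by nra.
  nra.
nra.
Qed.

Lemma sum_sq_expand (R : rcfType) n (u v : 'I_n -> R) c :
  \sum_(j < n) (u j + c * v j) ^+ 2
  = \sum_(j < n) u j ^+ 2 + 2 * c * dotv v u + c ^+ 2 * \sum_(j < n) v j ^+ 2.
Proof.
rewrite /dotv !mulr_sumr -!big_split; apply: eq_bigr => j _ /=; ring.
Qed.

Lemma per_i (R : rcfType) n (s y : 'I_n -> R) (rho : R) :
  0 < rho -> 0 < \sum_(j < n) s j ^+ 2 -> (forall j, y j ^+ 2 = 1 / 4) ->
  let N := enorm s in
  let t := dotv s y / N in
  let a := enorm (fun j => y j + rho * (s j / N)) in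
  let Rd := Num.sqrt (rho ^+ 2 + n%:R / 4) in
  let k := n%:R / (8 * rho) in
  (forall e, - (e / 2) <= t <= e / 2 -> - (e / 2 + k) <= a - Rd <= e / 2 + k) /\
  (forall D, - (D / 2) <= a - Rd <= D / 2 -> - (D / 2 + k) <= t <= D / 2 + k).
Proof.
move=> hrho hs hy N t a Rd k.
have hN : 0 < N by rewrite /N /enorm sqrtr_gt0.
have hN2 : N ^+ 2 = \sum_(j < n) s j ^+ 2 by rewrite /N /enorm sqr_sqrtr // ltW.
have hm : \sum_(j < n) y j ^+ 2 = n%:R / 4.
  rewrite (eq_bigr (fun _ => 1 / 4)) // sumr_const card_ord -mulr_natr; ring.
have hm0 : 0 <= n%:R / 4 :> R by apply: divr_ge0; rewrite ler0n.
have hdot : dotv s y = t * N by rewrite /t mulrVK // unitfE gt_eqF.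
have hN0 : N != 0 by rewrite gt_eqF.
have ha2 : a ^+ 2 = Rd ^+ 2 + 2 * rho * t.
  rewrite /a /enorm sqr_sqrtr; last by apply: sumr_ge0 => j _; exact: sqr_ge0.
  rewrite /Rd sqr_sqrtr; last by apply: addr_ge0 => //; exact: sqr_ge0.
  rewrite (eq_bigr (fun j => (y j + (rho / N) * s j) ^+ 2)); last first.
    by move=> j _; ring.
  rewrite sum_sq_expand hm hdot -hN2; field; exact: hN0.
have ht : t ^+ 2 <= n%:R / 4.
  have : 0 <= \sum_(j < n) (y j + (- t / N) * s j) ^+ 2.
    by apply: sumr_ge0 => j _; exact: sqr_ge0.
  rewrite sum_sq_expand hm hdot -hN2.
  have -> : n%:R / 4 + 2 * (- t / N) * (t * N) + (- t / N) ^+ 2 * N ^+ 2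
      = n%:R / 4 - t ^+ 2 by field.
  lra.
have hR2 : Rd ^+ 2 = rho ^+ 2 + n%:R / 4.
  by rewrite /Rd sqr_sqrtr //; apply: addr_ge0 => //; exact: sqr_ge0.
have hk : 2 * rho * k = n%:R / 4.
  rewrite /k; field; rewrite gt_eqF //.
have [] := @alg_core R rho Rd a (n%:R / 4) t k hrho (sqrtr_ge0 _) (sqrtr_ge0 _) hm0 hR2 ha2 ht hk.
move=> c1 c2 c3 c4 c5.
have k0 : 0 <= k by rewrite /k divr_ge0 ?ler0n // mulr_ge0 // ltW.
split.
  move=> e /andP [h1 h2]; apply/andP; split.
    lra.
  case: (lerP 0 t) => h.
    have := c2 h; lra.
  have := c3 (ltW h); lra.
move=> D /andP [h1 h2]; apply/andP; split.
  have h3 := c5 (D / 2) h1 ltac:(lra). lra.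
lra.
Qed.

Theorem lemma4p1 (R : rcfType) (n p : nat) (S : 'I_p -> 'I_n -> nat)
    (hS : forall i : 'I_p, exists j : 'I_n, S i j != 0%N)
    (rho : R) (hrho : 0 < rho) (x : 'I_n -> bool) :
  let xr : 'I_n -> R := fun j => (x j)%:R in
  let C : 'I_n -> R := fun _ => 1 / 2 in
  let Rad : R := Num.sqrt (rho ^+ 2 + n%:R / 4) in
  let Sr (i : 'I_p) : 'I_n -> R := fun j => (S i j)%:R in
  let Ci (i : 'I_p) : 'I_n -> R := fun j => C j - rho * (Sr i j / enorm (Sr i)) in
  let xmC : 'I_n -> R := fun j => xr j - C j in
  (forall eps : R,
     (forall i : 'I_p,
        - (eps / 2) <= dotv (Sr i) xmC / enorm (Sr i) <= eps / 2) ->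
     let delta := 2 * (eps / 2 + n%:R / (8 * rho)) in
     forall i : 'I_p,
       - (delta / 2) <= enorm (fun j => xr j - Ci i j) - Rad <= delta / 2)
  /\
  (forall delta : R,
     (forall i : 'I_p,
        - (delta / 2) <= enorm (fun j => xr j - Ci i j) - Rad <= delta / 2) ->
     let eps := 2 * (delta / 2 + n%:R / (8 * rho)) in
     forall i : 'I_p,
       - (eps / 2) <= dotv (Sr i) xmC / enorm (Sr i) <= eps / 2).
Proof.
move=> xr C Rad Sr Ci xmC.
have hy : forall j, xmC j ^+ 2 = 1 / 4.
  move=> j; rewrite /xmC /xr /C; case: (x j) => /=; rewrite ?mulr1n ?mulr0n; by field; rewrite ?pnatr_eq0.
have hsum : forall i, 0 < \sum_(j < n) Sr i j ^+ 2.
  move=> i; have [j hj] := hS i.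
  rewrite (bigD1 j) //=.
  have h1 : 0 < Sr i j ^+ 2 by rewrite exprn_gt0 // /Sr ltr0n lt0n.
  have h2 : 0 <= \sum_(k < n | k != j) Sr i k ^+ 2.
    by apply: sumr_ge0 => k _; exact: sqr_ge0.
  lra.
have hnorm : forall i, enorm (fun j => xr j - Ci i j)
    = enorm (fun j => xmC j + rho * (Sr i j / enorm (Sr i))).
  move=> i; rewrite /enorm; congr Num.sqrt; apply: eq_bigr => j _.
  rewrite /xmC /Ci; congr (_ ^+ 2); ring.
have E : forall X : R, 2 * X / 2 = X by move=> X; field; rewrite ?pnatr_eq0.
split.
  move=> eps H delta i; rewrite /delta E hnorm.
  have [A _] := @per_i R n (Sr i) xmC rho hrho (hsum i) hy.
  exact: A (H i).
move=> delta H eps i; rewrite /eps E.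
have [_ B] := @per_i R n (Sr i) xmC rho hrho (hsum i) hy.
apply: B; rewrite -hnorm; exact: H i.
Qed.
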